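(* Let $S$ be an isolated invariant set for $f$ and let $P=(N,L)$ and $P'=(N',L')$ be filtration pairs for $S$. Then there exist an integer $M(P,P')\ge 0$ and maps $r^k_{P'P}:N_L\to N'_{L'}$, defined for all integers $k\ge M(P,P')$, such that (1) $M(P,P')=M(P',P)$ and (2) $r^k_{PP}=f_P^k$; and such that if $P''=(N'',L'')$ is another filtration pair for $S$ then (3) $M(P,P'')\le M(P,P')+M(P',P'')$ and (4) $r^{k_1+k_2}_{P''P}=r^{k_1}_{P''P'}\circ r^{k_2}_{P'P}$ whenever $k_1\ge M(P',P'')$ and $k_2\ge M(P,P')$.
   Context: Let $X$ be a locally compact metric space, $U\subset X$ open and $f:U\to X$ continuous. A solution through $x$ is a map $\sigma:\mathbb Z\to U$ with $\sigma(0)=x$ and $f(\sigma(n))=\sigma(n+1)$ for all $n$; for $N\subset U$, $\operatorname{Inv} N$ is the set of $x\in N$ admitting a solution through $x$ with all values in $N$. A compact $N\subset U$ is an isolating neighborhood if $\operatorname{Inv} N\subset\operatorname{Int} N$; $S$ is an isolated invariant set if $S=\operatorname{Inv} N$ for some isolating neighborhood $N$. The exit set of $N$ is $N^-=\{x\in N:f(x)\notin\operatorname{Int} N\}$. A filtration pair for an isolated invariant set $S$ is a pair of compact sets $L\subset N$ contained in the interior of the domain of $f$, each the closure of its interior, such that (1) $\operatorname{cl}(N\setminus L)$ is an isolating neighborhood with $\operatorname{Inv}\operatorname{cl}(N\setminus L)=S$; (2) $L$ is a neighborhood of $N^-$ in $N$; (3) $f(L)\cap\operatorname{cl}(N\setminus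 L)=\emptyset$. For a filtration pair $P=(N,L)$, $N_L=N/L$ with $L$ collapsed to the base point $[L]$ (if $L=\emptyset$, $N_L$ is $N$ with a disjoint point $[L]$ adjoined), $p:N\to N_L$ is the quotient map, and the pointed space map $f_P:N_L\to N_L$ is $f_P([L])=[L]$, $f_P(p(x))=p(f(x))$ for $x\in N\setminus L$. *)

(* Defs.v *)
From HB Require Import structures.
From mathcomp Require Import all_boot all_order all_algebra.
From mathcomp Require Import all_classical all_reals all_analysis.
Set Implicit Arguments. Unset Strict Implicit. Unset Printing Implicit Defensive.
Import Order.TTheory GRing.Theory Num.Theory.
Local Open Scope classical_set_scope.

(* A map f : U -> X is represented by a total function f : X -> X together
   with the open set U; only its values on U are ever used. *)

Definition Inv {T : Type} (U : set T) (f : T -> T) (N : set T) : set T :=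
  [set x | N x /\ exists s : int -> T,
      s 0%R = x /\ (forall n, U (s n) /\ N (s n)) /\
      (forall n, f (s n) = s (n + 1)%R)].

Definition isolating_nbhd {T : topologicalType} (U : set T) (f : T -> T)
  (N : set T) : Prop :=
  compact N /\ N `<=` U /\ Inv U f N `<=` interior N.

Definition isolated_invariant {T : topologicalType} (U : set T) (f : T -> T)
  (S : set T) : Prop :=
  exists N, isolating_nbhd U f N /\ S = Inv U f N.

Definition exit_set {T : topologicalType} (f : T -> T) (N : set T) : set T :=
  [set x | N x /\ ~ interior N (f x)].

Definition filtration_pair {T : topologicalType} (U : set T) (f : T -> T)
  (S : set T) (P : set T * set T) : Prop :=
  let N := P.1 in let L := P.2 in
  (compact N /\ compact L /\ L `<=` N /\ N `<=` interior U /\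
   closure (interior N) = N /\ closure (interior L) = L) /\
  (isolating_nbhd U f (closure (N `\` L)) /\ Inv U f (closure (N `\` L)) = S) /\
  (* (2) L is a neighborhood of N^- in N *)
  (exists O : set T, open O /\ exit_set f N `<=` O /\ O `&` N `<=` L) /\
  (f @` L) `&` closure (N `\` L) = set0.

(* The pointed space N_L = N/L is represented inside option T:
   the base point [L] is None, and the class of x in N \ L is Some x. *)
Definition inNL {T : Type} (P : set T * set T) (z : option T) : Prop :=
  z = None \/ exists x, [/\ P.1 x, ~ P.2 x & z = Some x].

Definition proj {T : Type} (P : set T * set T) (x : T) : option T :=
  if `[< P.2 x >] then None else Some x.

(* quotient topology: V is open in N_L iff p^{-1}(V) is open in N
   (subspace topology of N in T). *)
Definition NL_open {T : topologicalType} (P : set T * set T)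
  (V : set (option T)) : Prop :=
  exists O : set T, open O /\ [set x | P.1 x /\ V (proj P x)] = O `&` P.1.

Definition pointed_map {T : topologicalType} (P P' : set T * set T)
  (g : option T -> option T) : Prop :=
  [/\ g None = None,
      (forall z, inNL P z -> inNL P' (g z))
    & (forall V, NL_open P' V -> NL_open P (g @^-1` V))].

Definition fP {T : Type} (f : T -> T) (P : set T * set T)
  (z : option T) : option T :=
  match z with None => None | Some x => proj P (f x) end.

(* Main.v *)
Require Import Defs.
From HB Require Import structures.
From mathcomp Require Import all_boot all_order all_algebra.
From mathcomp Require Import all_classical all_reals all_analysis.
From mathcomp Require Import zify.
Local Open Scope classical_set_scope.
Set Implicit Arguments. Unset Strict Implicit.

Section Main.
Variables (R : realType) (X : metricType R) (U : set X) (f : X -> X) (S : set X).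
Hypotheses (oU : open U) (cf : {within U, continuous f}).

Definition G (P : set X * set X) := P.1 `\` P.2.
Definition A (P : set X * set X) := closure (G P).

Lemma hX : hausdorff_space X.
Proof. exact: metric_hausdorff. Qed.

Lemma fcont x : U x -> {for x, continuous f}.
Proof.
move=> Ux; have := cf; rewrite continuous_open_subspace // => h.
by apply: h; rewrite inE.
Qed.

Lemma cont_iter n x : (forall j, (j < n)%N -> U (iter j f x)) ->
  {for x, continuous (iter n f)}.
Proof.
elim: n => [_|n IH H]; first exact: cvg_id.
change {for x, continuous (f \o iter n f)}.
apply: continuous_comp; first by apply: IH => j jn; apply: H; apply: ltnW.
by apply: fcont; apply: H.
Qed.

Section FP.
Variable P : set X * set X.
Hypothesis fpP : filtration_pair U f S P.

Lemma fp_Nc : compact P.1. Proof. by case: fpP => [[]]. Qed.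
Lemma fp_Lc : compact P.2. Proof. by case: fpP => [[_ []]]. Qed.
Lemma fp_LN : P.2 `<=` P.1. Proof. by case: fpP => [[_ [_ []]]]. Qed.
Lemma fp_NU : P.1 `<=` U.
Proof. case: fpP => [[_ [_ [_ [h _]]]]] _ x /h; exact: interior_subset. Qed.
Lemma fp_Ncl : closed P.1. Proof. exact: compact_closed hX fp_Nc. Qed.
Lemma fp_Lcl : closed P.2. Proof. exact: compact_closed hX fp_Lc. Qed.
Lemma fp_GA : G P `<=` A P. Proof. exact: subset_closure. Qed.
Lemma fp_Acl : closed (A P). Proof. exact: closed_closure. Qed.
Lemma fp_AN : A P `<=` P.1.
Proof.
move=> x Ax; apply: fp_Ncl; apply: (closureS _ Ax) => y [] //.
Qed.
Lemma fp_Ac : compact (A P).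
Proof. exact: subclosed_compact fp_Acl fp_Nc fp_AN. Qed.
Lemma fp_nonexit x : G P x -> P.1 (f x).
Proof.
move=> [Nx nLx]; case: fpP => _ [_ [h3 _]]; case: h3 => O [_ [hO hON]].
have [/interior_subset //|nI] := pselect ((P.1)° (f x)).
by exfalso; apply: nLx; apply: hON; split => //; apply: hO.
Qed.
Lemma fp_LA x : P.2 x -> ~ A P (f x).
Proof.
move=> Lx Afx; case: fpP => _ [_ [_ h]].
have : (f @` P.2 `&` closure (P.1 `\` P.2)) (f x) by split => //; exists x.
by rewrite h.
Qed.
Lemma fp_Inv : Defs.Inv U f (A P) = S. Proof. by case: fpP => _ [[_ h] _]. Qed.
Lemma fp_iso : isolating_nbhd U f (A P). Proof. by case: fpP => _ [[h _] _]. Qed.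

End FP.

Definition winP (P Q : set X * set X) (w : nat) :=
  forall x, (forall i, (i <= 2 * w)%N -> A P (iter i f x)) -> G Q (iter w f x).

Lemma GA P : G P `<=` A P. Proof. exact: subset_closure. Qed.

Lemma winP_mono P Q w w' : winP P Q w -> (w <= w')%N -> winP P Q w'.
Proof.
move=> h le x hx; have := h (iter (w' - w) f x).
rewrite -iterD subnKC //; apply => i hi.
rewrite -iterD; apply: hx; lia.
Qed.

Lemma win_at P Q m x j : winP P Q m -> (m <= j)%N ->
  (forall i, (j - m <= i)%N -> (i <= j + m)%N -> A P (iter i f x)) ->
  G Q (iter j f x).
Proof.
move=> h mj hx; have := h (iter (j - m) f x).
rewrite -iterD subnKC //; apply => i hi.
rewrite -iterD; apply: hx; lia.
Qed.

Lemma win_ext P Q m x lo hi : winP P Q m ->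
  (forall i, (lo <= i)%N -> (i <= hi)%N -> G P (iter i f x)) ->
  forall j, (lo + m <= j)%N -> (j + m <= hi)%N -> G Q (iter j f x).
Proof.
move=> h hx j h1 h2; apply: (win_at h); first lia.
move=> i i1 i2; apply: GA; apply: hx; lia.
Qed.

Lemma win_trans P P' P'' w1 w2 :
  winP P P' w1 -> winP P' P'' w2 -> winP P P'' (w1 + w2).
Proof.
move=> h1 h2 x hx; rewrite addnC iterD; apply: h2 => i hi.
rewrite -iterD addnC iterD; apply: GA; apply: h1 => l hl.
rewrite -iterD; apply: hx; lia.
Qed.

Definition W P Q w := winP P Q w /\ winP Q P w.

Lemma W_sym P Q w : W P Q w -> W Q P w.
Proof. by case. Qed.

Lemma W_mono P Q w w' : W P Q w -> (w <= w')%N -> W P Q w'.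
Proof. by case=> h1 h2 le; split; apply: winP_mono le. Qed.

Lemma W_trans P P' P'' w1 w2 :
  W P P' w1 -> W P' P'' w2 -> W P P'' (w1 + w2).
Proof.
case=> h1 h1' [h2 h2']; split; first exact: win_trans h1 h2.
by rewrite addnC; apply: win_trans h2' h1'.
Qed.

Definition wfun P Q : nat :=
  match pselect (exists w, `[< W P Q w >]) with
  | left h => ex_minn h | right _ => 0%N end.

Lemma wfunP P Q : (exists w, W P Q w) ->
  W P Q (wfun P Q) /\ forall w, W P Q w -> (wfun P Q <= w)%N.
Proof.
move=> ex; rewrite /wfun; case: pselect => [h|n]; last first.
  by exfalso; apply: n; case: ex => w hw; exists w; apply/asboolP.
case: ex_minnP => m /asboolP Wm hmin; split => // w Ww; apply: hmin.
exact/asboolP.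
Qed.

Lemma wfun_sym P Q : (exists w, W P Q w) -> wfun P Q = wfun Q P.
Proof.
move=> ex; have ex' : exists w, W Q P w by case: ex => w /W_sym; exists w.
have [h1 m1] := wfunP ex; have [h2 m2] := wfunP ex'.
apply/eqP; rewrite eqn_leq; apply/andP; split.
  by apply: m1; apply: W_sym.
by apply: m2; apply: W_sym.
Qed.

Definition E P Q m k x :=
  (forall i, (i <= k - m)%N -> G P (iter i f x)) /\
  (forall i, (m <= i)%N -> (i <= k)%N -> G Q (iter i f x)).

Lemma E_comp P P' P'' m1 m2 m3 k1 k2 x :
  W P P' m1 -> W P' P'' m2 -> W P P'' m3 -> (m3 <= m1 + m2)%N ->
  (3 * m1 + 2 <= k2)%N -> (3 * m2 + 2 <= k1)%N ->
  (E P P' m1 k2 x /\ E P' P'' m2 k1 (iter k2 f x)) <-> E P P'' m3 (k1 + k2) x.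
Proof.
move=> [w1 w1'] [w2 w2'] [w3 w3'] m3le k2ge k1ge; split.
- move=> [[h1 h2] [h3 h4]].
  have g' : forall i, (m1 <= i)%N -> (i <= k1 + k2 - m2)%N -> G P' (iter i f x).
    move=> i i1 i2; have [ik|ik] := leqP i k2; first exact: h2.
    have := h3 (i - k2); rewrite -iterD subnK; last lia.
    apply; lia.
  have g'' : forall i, (m1 + m2 <= i)%N -> (i <= k1 + k2)%N -> G P'' (iter i f x).
    move=> i i1 i2; have [ik|ik] := leqP i (k1 + k2 - 2 * m2).
      apply: (win_ext w2 g'); lia.
    have := h4 (i - k2); rewrite -iterD subnK; last lia.
    apply; lia.
  have gP : forall i, (i <= k1 + k2 - m3)%N -> G P (iter i f x).
    move=> i i2; have [ik|ik] := leqP i (k2 - m1); first exact: h1.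
    have [ik2|ik2] := leqP i (k1 + k2 - m1 - m2).
      apply: (win_ext w1' g'); lia.
    apply: (win_ext w3' g''); lia.
  split => // i i1 i2; have [ik|ik] := leqP (m1 + m2) i; first exact: g''.
  have gP' : forall i, (0 <= i)%N -> (i <= k1 + k2 - m3)%N -> G P (iter i f x).
    by move=> l _; apply: gP.
  apply: (win_ext w3 gP'); lia.
- move=> [H1 H2].
  have H1' : forall i, (0 <= i)%N -> (i <= k1 + k2 - m3)%N -> G P (iter i f x).
    by move=> l _; apply: H1.
  have g' : forall i, (m1 <= i)%N -> (i <= k1 + k2 - m2)%N -> G P' (iter i f x).
    move=> i i1 i2; have [ik|ik] := leqP i (k1 + k2 - m3 - m1).
      apply: (win_ext w1 H1'); lia.
    apply: (win_ext w2' H2); lia.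
  split; split.
  + move=> i hi; apply: H1; lia.
  + move=> i i1 i2; apply: g'; lia.
  + move=> i hi; rewrite -iterD; apply: g'; lia.
  + move=> i i1 i2; rewrite -iterD; apply: H2; lia.
Qed.


Lemma fP_iter P k x : filtration_pair U f S P -> G P x ->
  iter k (fP f P) (Some x) =
  if `[< forall i, (i <= k)%N -> G P (iter i f x) >] then Some (iter k f x)
  else None.
Proof.
move=> fpP Gx; elim: k => [|k IH].
  rewrite asboolT //= => i; rewrite leqn0 => /eqP -> //.
rewrite iterS IH; case: (asboolP (forall i, (i <= k)%N -> G P (iter i f x))) => hk /=.
  rewrite /Defs.proj; case: (asboolP (P.2 (f (iter k f x)))) => hl.
    rewrite asboolF // => h; have := h k.+1 (leqnn _); by case.
  rewrite asboolT // => i; rewrite leq_eqVlt ltnS => /orP [/eqP ->|]; last exact: hk.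
  by split => //; apply: (fp_nonexit fpP); apply: hk.
rewrite asboolF // => h; apply: hk => i ik; apply: h; exact: leqW.
Qed.

Lemma first_fail (Pr : nat -> Prop) lo hi :
  (exists i, [/\ (lo <= i)%N, (i <= hi)%N & ~ Pr i]) ->
  exists i, [/\ (lo <= i)%N, (i <= hi)%N, ~ Pr i &
     forall j, (lo <= j)%N -> (j < i)%N -> Pr j].
Proof.
move=> ex.
have ex' : exists i, `[< [/\ (lo <= i)%N, (i <= hi)%N & ~ Pr i] >].
  by case: ex => i hi'; exists i; apply/asboolP.
case: (ex_minnP ex') => i /asboolP [h1 h2 h3] hmin; exists i; split => // j j1 j2.
apply: contrapT => nj.
have := hmin j (asboolT (And3 j1 (leq_trans (ltnW j2) h2) nj)); lia.
Qed.

Lemma near_all_le (F : set_system X) (Pn : nat -> X -> Prop) n : Filter F ->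
  (forall i, (i <= n)%N -> F (fun z => Pn i z)) ->
  F (fun z => forall i, (i <= n)%N -> Pn i z).
Proof.
move=> FF; elim: n => [|n IH] h.
  move: (h 0%N (leqnn 0)); apply: filterS => z hz i; rewrite leqn0 => /eqP -> //.
have H := @filterI _ F FF _ _ (IH (fun i hi => h i (leqW hi))) (h n.+1 (leqnn _)).
move: H; apply: filterS => z [h1 h2] i; rewrite leq_eqVlt ltnS => /orP [/eqP -> //|].
exact: h1.
Qed.

Lemma near_cont (g : X -> X) x (B : set X) : {for x, continuous g} ->
  open B -> B (g x) -> nbhs x (fun z => B (g z)).
Proof. by move=> c oB Bg; apply: c; apply: open_nbhs_nbhs. Qed.

Definition rrm P Q m k (z : option X) : option X :=
  match z with
  | None => None
  | Some x => if `[< E P Q m k x >] then Some (iter k f x) else None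
  end.

Lemma rrm_proj P Q m k y : P.1 y ->
  rrm P Q m k (Defs.proj P y) = if `[< E P Q m k y >] then Some (iter k f y) else None.
Proof.
move=> Py; rewrite /Defs.proj; case: (asboolP (P.2 y)) => //= Ly.
rewrite asboolF // => [[h _]]; have := h 0%N (leq0n _); by case.
Qed.

Section Cont.
Variables (P Q : set X * set X) (m k : nat).
Hypotheses (fpP : filtration_pair U f S P) (fpQ : filtration_pair U f S Q)
  (hW : W P Q m) (hk : (3 * m + 2 <= k)%N).

Lemma E_U x : E P Q m k x -> forall j, (j <= k)%N -> U (iter j f x).
Proof.
move=> [h1 h2] j jk; have [jm|jm] := leqP j (k - m).
  by apply: (fp_NU fpP); case: (h1 j jm).
by apply: (fp_NU fpQ); case: (h2 j ltac:(lia) jk).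
Qed.

Lemma E_of_notL z : P.1 z ->
  (forall i, (i <= k - m)%N -> ~ P.2 (iter i f z)) ->
  (forall i, (i <= k)%N -> (m <= i)%N -> ~ Q.2 (iter i f z)) -> E P Q m k z.
Proof.
move=> Pz h1 h2.
have g1 : forall i, (i <= k - m)%N -> G P (iter i f z).
  elim => [_|i IH ik]; first by split => //; apply: (h1 0%N).
  split; last exact: h1.
  by apply: (fp_nonexit fpP); apply: IH; apply: ltnW.
split => // i i1 i2.
have gm : G Q (iter m f z).
  apply: (win_at hW.1) => // l l1 l2; apply: GA; apply: g1; lia.
have -> : i = (m + (i - m))%N by lia.
have : (m + (i - m) <= k)%N by lia.
elim: (i - m)%N => [|d IH] hd; first by rewrite addn0.
rewrite addnS; split; last by apply: h2 => //; lia.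
by apply: (fp_nonexit fpQ); apply: IH; lia.
Qed.

Lemma E_G1 z : E P Q m k z -> forall i, (i <= k - m)%N -> G P (iter i f z).
Proof. by case. Qed.
Lemma E_G2 z : E P Q m k z -> forall i, (m <= i)%N -> (i <= k)%N -> G Q (iter i f z).
Proof. by case. Qed.


Lemma rrm_nbhs (V : set (option X)) (Ob : set X) : open Ob ->
  (forall z, G Q z -> V (Some z) <-> Ob z) ->
  (V None -> forall z, Q.2 z -> Ob z) ->
  forall x, P.1 x -> V (rrm P Q m k (Defs.proj P x)) ->
  nbhs x (fun z => P.1 z -> V (rrm P Q m k (Defs.proj P z))).
Proof.
move=> oO VS VN x Px; rewrite rrm_proj //.
case: (asboolP (E P Q m k x)) => Ex Vx.
- have GQk : G Q (iter k f x) by apply: (E_G2 Ex) => //; lia.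
  have Obx := (VS _ GQk).1 Vx.
  have cU := E_U Ex.
  have n1 : nbhs x (fun z => forall i, (i <= k - m)%N -> ~ P.2 (iter i f z)).
    apply: near_all_le => i ik.
    apply: (near_cont (B := ~` P.2)).
    + by apply: cont_iter => j ji; apply: cU; lia.
    + exact: closed_openC (fp_Lcl fpP).
    + by case: (E_G1 Ex ik).
  have n2 : nbhs x (fun z => forall i, (i <= k)%N -> (m <= i)%N -> ~ Q.2 (iter i f z)).
    apply: near_all_le => i ik.
    have [mi|mi] := leqP m i.
      have cUi : forall j, (j < i)%N -> U (iter j f x) by move=> j ji; apply: cU; lia.
      have nQ : ~ Q.2 (iter i f x) by case: (E_G2 Ex mi ik).
      by apply: filterS (near_cont (B := ~` Q.2) (cont_iter cUi) (closed_openC (fp_Lcl fpQ)) nQ) => z hz _.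
    by apply: filterE => z mi'; lia.
  have n3 : nbhs x (fun z => Ob (iter k f z)).
    apply: near_cont => //; apply: cont_iter => j jk; apply: cU; lia.
  apply: filterS (filterI n1 (filterI n2 n3)) => z [h1 [h2 h3]] Pz.
  have Ez := E_of_notL Pz h1 h2.
  have GQz : G Q (iter k f z) by apply: (E_G2 Ez) => //; lia.
  by rewrite rrm_proj // (asboolT Ez); apply: (VS _ GQz).2.
- have OL := VN Vx.
  have [ [i0 [i1 i2 i3 i4]] | allP] : (exists i, [/\ (0 <= i)%N, (i <= k - m - 1)%N,
       ~ G P (iter i f x) & forall j, (0 <= j)%N -> (j < i)%N -> G P (iter j f x)])
       \/ (forall i, (i <= k - m - 1)%N -> G P (iter i f x)).
    case: (pselect (exists i, [/\ (0 <= i)%N, (i <= k - m - 1)%N & ~ G P (iter i f x)])).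
      by move=> ex; left; apply: first_fail.
    by move=> nex; right => i ik; apply: contrapT => ng; apply: nex; exists i; split.
  + have Pi0 : P.1 (iter i0 f x).
      move: i3 i4; case: i0 {i1 i2} => [//|j] _ h.
      by apply: (fp_nonexit fpP); apply: h.
    have Li0 : P.2 (iter i0 f x) by apply: contrapT => nL; apply: i3.
    have cU : forall j, (j < i0.+1)%N -> U (iter j f x).
      move=> j; rewrite ltnS leq_eqVlt => /orP [/eqP ->|jl].
        exact: (fp_NU fpP).
      by apply: (fp_NU fpP); case: (i4 j (leq0n _) jl).
    have nA : (~` A P) (iter i0.+1 f x) := fp_LA fpP Li0.
    have nb := near_cont (cont_iter cU) (closed_openC (@fp_Acl P)) nA.
    apply: filterS nb => z hz Pz; rewrite rrm_proj // asboolF // => Ez.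
    by apply: hz; apply: GA; apply: (E_G1 Ez); lia.
  + have gQm1 : G Q (iter m.+1 f x).
      apply: (win_at hW.1) => // l l1 l2; apply: GA; apply: allP; lia.
    have gQm : G Q (iter m f x).
      apply: (win_at hW.1) => // l l1 l2; apply: GA; apply: allP; lia.
    have ex : exists j, [/\ (m.+1 <= j)%N, (j <= k)%N & ~ G Q (iter j f x)].
      apply: contrapT => nex; apply: Ex; split.
        move=> i ik; have [ik'|ik'] := leqP i (k - m - 1); first exact: allP.
        have -> : i = (k - m)%N by lia.
        apply: (win_at hW.2); first lia.
        move=> l l1 l2; apply: GA; apply: contrapT => nl; apply: nex; exists l; split => //; lia.
      move=> i i1 i2; have [im|im] := leqP i m.
        by have -> : i = m by lia.
      by apply: contrapT => nl; apply: nex; exists i; split.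
    have [j0 [j1 j2 j3 j4]] := first_fail ex.
    have gprev : G Q (iter j0.-1 f x).
      apply: j4; last lia.
      have : j0 <> m.+1 by move=> e; apply: j3; rewrite e.
      lia.
    have Qj0 : Q.1 (iter j0 f x).
      have e : j0 = j0.-1.+1 by lia.
      by rewrite e; apply: (fp_nonexit fpQ).
    have Lj0 : Q.2 (iter j0 f x) by apply: contrapT => nL; apply: j3.
    have cU : forall l, (l < j0.+1)%N -> U (iter l f x).
      move=> l; rewrite ltnS leq_eqVlt => /orP [/eqP ->|jl].
        exact: (fp_NU fpQ).
      have [lk|lk] := leqP l (k - m - 1).
        by apply: (fp_NU fpP); case: (allP l lk).
      by apply: (fp_NU fpQ); case: (j4 l ltac:(lia) jl).
    have [jk|jk] := ltnP j0 k.
      have nA : (~` A Q) (iter j0.+1 f x) := fp_LA fpQ Lj0.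
      have nb := near_cont (cont_iter cU) (closed_openC (@fp_Acl Q)) nA.
      apply: filterS nb => z hz Pz; rewrite rrm_proj // asboolF // => Ez.
      by apply: hz; apply: GA; apply: (E_G2 Ez); lia.
    have ek : j0 = k by lia.
    rewrite ek in Lj0 cU.
    apply: filterS (near_cont (B := Ob) (cont_iter (fun l lk => cU l (ltnW lk))) oO (OL _ Lj0)) => z hz Pz; rewrite rrm_proj //.
    case: (asboolP (E P Q m k z)) => // Ez.
    have GQz : G Q (iter k f z) by apply: (E_G2 Ez) => //; lia.
    by apply: (VS _ GQz).2.
Qed.

Lemma rrm_cont V : NL_open Q V -> NL_open P (rrm P Q m k @^-1` V).
Proof.
move=> [Ob [oO hO]].
have VS : forall z, G Q z -> V (Some z) <-> Ob z.
  move=> z [Qz nLz].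
  have e : ([set y | Q.1 y /\ V (Defs.proj Q y)] z) = ((Ob `&` Q.1) z) by rewrite hO.
  move: e => /=; rewrite /Defs.proj asboolF // => e; split.
    by move=> Vz; have : (Q.1 z /\ V (Some z)) by []; rewrite e; case.
  by move=> Oz; have : (Ob z /\ Q.1 z) by []; rewrite -e; case.
have VN : V None -> forall z, Q.2 z -> Ob z.
  move=> VN z Lz; have Qz := fp_LN fpQ Lz.
  have e : ([set y | Q.1 y /\ V (Defs.proj Q y)] z) = ((Ob `&` Q.1) z) by rewrite hO.
  move: e => /=; rewrite /Defs.proj asboolT // => e.
  by have : (Q.1 z /\ V None) by []; rewrite e; case.
exists (interior [set y | P.1 y -> V (rrm P Q m k (Defs.proj P y))]).
split; first exact: open_interior.
apply/seteqP; split => y /=; last first.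
  by move=> [Iy Py]; split => //; apply: (interior_subset Iy Py).
move=> [Py Vy]; split => //.
exact: (rrm_nbhs oO VS VN Py Vy).
Qed.

End Cont.


Lemma closed_fiber (D Z : set X) (g : X -> X) : closed D -> closed Z ->
  (forall x, D x -> {for x, continuous g}) -> closed (D `&` g @^-1` Z).
Proof.
move=> cD cZ cg x cx.
have Dx : D x by apply: cD; apply: (closureS _ cx) => y [].
split => //; apply: contrapT => nZ.
have nZ' : (~` Z) (g x) by [].
have nb := near_cont (cg x Dx) (closed_openC cZ) nZ'.
by have [y [[_ Zy] nZy]] := cx _ nb.
Qed.

Lemma nested (K : nat -> set X) (C : set X) : compact C ->
  (forall n, closed (K n)) -> (forall n, K n `<=` C) ->
  (forall n, K n.+1 `<=` K n) -> (forall n, K n !=set0) ->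
  exists y, forall n, K n y.
Proof.
move=> cC hcl hC hdec hne.
have mono : forall n l, (n <= l)%N -> K l `<=` K n.
  move=> n; elim => [|l IH]; first by rewrite leqn0 => /eqP ->.
  rewrite leq_eqVlt => /orP [/eqP ->//|]; rewrite ltnS => nl.
  by move=> y /hdec; apply: IH.
have FF : ProperFilter (filter_from setT K).
  apply: filter_from_proper; last by move=> i _; apply: hne.
  apply: filter_from_filter; first by exists 0%N.
  move=> i j _ _; exists (maxn i j) => //.
  by move=> y h; split; apply: (mono _ (maxn i j)) => //; rewrite ?leq_maxl ?leq_maxr.
have FC : filter_from setT K C by exists 0%N.
have [y [Cy cly]] := cC _ FF FC.
exists y => n; apply: (hcl n) => B nB.
by apply: cly nB; exists n.
Qed.

Section Compactness.
Variables (P Q : set X * set X).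
Hypotheses (fpP : filtration_pair U f S P) (fpQ : filtration_pair U f S Q).

Definition D j := [set x | forall i, (i <= j)%N -> A P (iter i f x)].

Lemma A_U y : A P y -> U y.
Proof. by move=> /(fp_AN fpP) /(fp_NU fpP). Qed.

Lemma D_closed j : closed (D j).
Proof.
elim: j => [|j IH].
  have -> : D 0 = A P.
    apply/seteqP; split => y /=; first by move=> h; apply: (h 0%N).
    by move=> Ay i; rewrite leqn0 => /eqP ->.
  exact: fp_Acl.
have -> : D j.+1 = D j `&` iter j.+1 f @^-1` A P.
  apply/seteqP; split => y /=.
    by move=> h; split; [move=> i ij; apply: h; apply: leqW|exact: (h j.+1 (leqnn _))].
  move=> [h1 h2] i; rewrite leq_eqVlt ltnS => /orP [/eqP ->//|]; exact: h1.
apply: closed_fiber IH (@fp_Acl P) _ => x Dx.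
by apply: cont_iter => l; rewrite ltnS => lj; apply: A_U; apply: Dx.
Qed.

Lemma D_compact j : compact (D j).
Proof.
have sub : D j `<=` A P by move=> x h; exact: (h 0%N (leq0n _)).
exact: (subclosed_compact (@D_closed j) (fp_Ac fpP) sub).
Qed.

Definition B n := iter n f @` D (2 * n).

Lemma B_compact n : compact (B n).
Proof.
apply: continuous_compact; last exact: D_compact.
apply: continuous_in_subspaceT => x; rewrite inE => Dx.
by apply: cont_iter => l ln; apply: A_U; apply: Dx; lia.
Qed.

Lemma B_closed n : closed (B n).
Proof. exact: compact_closed hX (@B_compact n). Qed.

Lemma B_decr n : B n.+1 `<=` B n.
Proof.
move=> _ [x Dx <-]; exists (f x); last by rewrite iterSr.
by move=> i hi; rewrite -iterSr; apply: Dx; lia.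
Qed.

Lemma B_sub n : B n `<=` A P.
Proof. by move=> _ [x Dx <-]; apply: Dx; lia. Qed.

Lemma B_fwd y n : (forall l, B l y) -> A P (iter n f y).
Proof.
move=> h; have [x Dx <-] := h n; rewrite -iterD; apply: Dx; lia.
Qed.

Lemma B_pred y : (forall n, B n y) -> exists z, (forall n, B n z) /\ f z = y.
Proof.
move=> hy.
have cs : closed [set y] by exact: (compact_closed hX (@compact_set1 _ y)).
pose K := fun n => B n `&` (A P `&` f @^-1` [set y]).
have k1 : forall n, closed (K n).
  move=> n; apply: closedI; first exact: B_closed.
  apply: closed_fiber (@fp_Acl P) cs _ => x Ax; apply: fcont; exact: A_U.
have k2 : forall n, K n `<=` A P by move=> n w [_ []].
have k3 : forall n, K n.+1 `<=` K n by move=> n w0 [h1 h2]; split => //; apply: B_decr.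
have k4 : forall n, K n !=set0.
  move=> n; have [x Dx ex] := hy n.+1.
  exists (iter n f x); split; last split.
  + by exists x => //; move=> i hi; apply: Dx; lia.
  + by apply: Dx; lia.
  + by rewrite /= -ex.
have [z hz] := nested (fp_Ac fpP) k1 k2 k3 k4.
exists z; split; first by move=> n; case: (hz n).
by case: (hz 0%N) => _ [].
Qed.

Lemma B_Inv y : (forall n, B n y) -> Defs.Inv U f (A P) y.
Proof.
move=> hy.
have hc : forall w, exists z,
  (forall n, B n w) -> (forall n, B n z) /\ f z = w.
  move=> w; case: (pselect (forall n, B n w)) => [hw|nw].
    by have [z hz] := B_pred hw; exists z.
  by exists w.
have [g hg] := choice hc.
have gB : forall n, forall l, B l (iter n g y).
  elim => [//|n IH]; rewrite iterS; exact: ((hg _) IH).1.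
have gf : forall n, f (iter n.+1 g y) = iter n g y.
  by move=> n; rewrite iterS; exact: ((hg _) (gB n)).2.
split; first by apply: (B_sub (hy 0%N)).
exists (fun i : int => match i with Posz n => iter n f y | Negz n => iter n.+1 g y end).
split => //; split.
  case=> n /=.
    have : A P (iter n f y) by apply: B_fwd.
    by move=> h; split => //; apply: A_U.
  have : A P (iter n.+1 g y) by apply: (B_sub (gB n.+1 0%N)).
  by move=> h; split => //; apply: A_U.
case=> n.
  have -> : (Posz n + 1 = Posz n.+1)%R by rewrite -addn1.
  by [].
case: n => [|n].
  have -> : (Negz 0 + 1 = Posz 0)%R by [].
  exact: (gf 0%N).
have -> : (Negz n.+1 + 1 = Negz n)%R.
  by rewrite !NegzE -addn1 PoszD GRing.opprD GRing.addrK.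
exact: gf.
Qed.

Lemma ex_win : exists w, winP P Q w.
Proof.
apply: contrapT => nex.
have hx : forall w, exists x, (forall i, (i <= 2 * w)%N -> A P (iter i f x)) /\
    ~ G Q (iter w f x).
  move=> w; apply: contrapT => nx; apply: nex; exists w => x hx.
  by apply: contrapT => ng; apply: nx; exists x; split.
set Vo := interior Q.1 `&` ~` Q.2.
have oVo : open Vo by apply: openI; [exact: open_interior|exact: closed_openC (fp_Lcl fpQ)].
have SV : S `<=` Vo.
  rewrite -(fp_Inv fpQ) => y Iy; split.
    have := (fp_iso fpQ).2.2 y Iy; apply: interiorS; exact: (fp_AN fpQ).
  move=> Ly; case: Iy => _ [s [s0 [sUN sf]]].
  apply: (fp_LA fpQ Ly); rewrite -s0 sf; exact: (sUN 1%R).2.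
pose K := fun n => B n `&` ~` Vo.
have k1 : forall n, closed (K n).
  by move=> n; apply: closedI; [exact: B_closed|exact: open_closedC].
have k2 : forall n, K n `<=` A P by move=> n w0 [h _]; apply: B_sub h.
have k3 : forall n, K n.+1 `<=` K n by move=> n w0 [h1 h2]; split => //; apply: B_decr.
have k4 : forall n, K n !=set0.
  move=> n; have [x [h1 h2]] := hx n; exists (iter n f x); split.
    by exists x.
  by move=> [/interior_subset Qx nL]; apply: h2.
have [y hy] := nested (fp_Ac fpP) k1 k2 k3 k4.
have : S y.
  rewrite -(fp_Inv fpP); apply: B_Inv => n; exact: (hy n).1.
by move=> /SV Vy; case: (hy 0%N).
Qed.

End Compactness.


Lemma ex_W P Q : filtration_pair U f S P -> filtration_pair U f S Q ->
  exists w, W P Q w.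
Proof.
move=> fpP fpQ; have [w1 h1] := ex_win fpP fpQ; have [w2 h2] := ex_win fpQ fpP.
exists (maxn w1 w2); split.
  by apply: winP_mono h1 _; rewrite leq_maxl.
by apply: winP_mono h2 _; rewrite leq_maxr.
Qed.

Lemma iter_fP_None P k : iter k (fP f P) None = None.
Proof. by elim: k => //= k ->. Qed.

Lemma wfun_tri P P' P'' : filtration_pair U f S P -> filtration_pair U f S P' ->
  filtration_pair U f S P'' -> (wfun P P'' <= wfun P P' + wfun P' P'')%N.
Proof.
move=> fp fp' fp''.
have [h1 _] := wfunP (ex_W fp fp'); have [h2 _] := wfunP (ex_W fp' fp'').
have [_ m3] := wfunP (ex_W fp fp'').
exact: m3 (W_trans h1 h2).
Qed.

Lemma main_sec :
  exists (M : set X * set X -> set X * set X -> nat)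
         (r : set X * set X -> set X * set X -> nat -> option X -> option X),
    (forall P P', filtration_pair U f S P -> filtration_pair U f S P' ->
       forall k, (M P P' <= k)%N -> pointed_map P P' (r P' P k)) /\
    (forall P P', filtration_pair U f S P -> filtration_pair U f S P' ->
       M P P' = M P' P) /\
    (forall P, filtration_pair U f S P ->
       forall k, (M P P <= k)%N ->
       forall z, inNL P z -> r P P k z = iter k (fP f P) z) /\
    (forall P P' P'', filtration_pair U f S P -> filtration_pair U f S P' ->
       filtration_pair U f S P'' ->
       (M P P'' <= M P P' + M P' P'')%N) /\
    (forall P P' P'', filtration_pair U f S P -> filtration_pair U f S P' ->
       filtration_pair U f S P'' ->
       forall k1 k2, (M P' P'' <= k1)%N -> (M P P' <= k2)%N ->
       forall z, inNL P z ->
         r P'' P (k1 + k2) z = r P'' P' k1 (r P' P k2 z)).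
Proof.
exists (fun P Q => (3 * wfun P Q + 2)%N), (fun Q P k => rrm P Q (wfun P Q) k).
split; [|split; [|split; [|split]]].
- move=> P Q fpP fpQ k hk; have [hW _] := wfunP (ex_W fpP fpQ); split => //.
    move=> z [->|[x [Px nLx ->]]]; first by left.
    rewrite /=; case: asboolP => Ez; last by left.
    right; exists (iter k f x).
    have [] : G Q (iter k f x) by apply: (E_G2 Ez) => //; lia.
    by [].
  by move=> V hV; apply: rrm_cont.
- by move=> P Q fpP fpQ; rewrite (wfun_sym (ex_W fpP fpQ)).
- move=> P fpP k hk z [->|[x [Px nLx ->]]]; first by rewrite iter_fP_None.
  have Gx : G P x by [].
  rewrite (fP_iter k fpP Gx) /=.
  case: asboolP => e1; case: asboolP => e2 //; exfalso.
    apply: e2 => i ik; have [ik'|ik'] := leqP i (k - wfun P P).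
      exact: e1.1.
    by apply: e1.2; lia.
  by apply: e1; split => i *; apply: e2; lia.
- move=> P P' P'' fp fp' fp''; have := wfun_tri fp fp' fp''; lia.
- move=> P P' P'' fp fp' fp'' k1 k2 hk1 hk2 z [->|[x [Px nLx ->]]]; first by [].
  have [h1 _] := wfunP (ex_W fp fp'); have [h2 _] := wfunP (ex_W fp' fp'').
  have [h3 _] := wfunP (ex_W fp fp'').
  have ec := E_comp x h1 h2 h3 (wfun_tri fp fp' fp'') hk2 hk1.
  rewrite /=; case: (asboolP (E P P' (wfun P P') k2 x)) => e1 /=.
    case: (asboolP (E P' P'' (wfun P' P'') k1 (iter k2 f x))) => e2.
      by rewrite asboolT; [rewrite iterD|apply/ec].
    by rewrite asboolF // => /ec [].
  by rewrite asboolF // => /ec [].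
Qed.

End Main.

Theorem mainTheorem6 (R : realType) (X : metricType R) (U : set X)
  (f : X -> X) (S : set X) :
  locally_compact [set: X] -> open U -> {within U, continuous f} ->
  isolated_invariant U f S ->
  exists (M : set X * set X -> set X * set X -> nat)
         (r : set X * set X -> set X * set X -> nat -> option X -> option X),
    (* r P' P k : N_L -> N'_{L'} is a map of pointed spaces for k >= M(P,P') *)
    (forall P P', filtration_pair U f S P -> filtration_pair U f S P' ->
       forall k, (M P P' <= k)%N -> pointed_map P P' (r P' P k)) /\
    (* (1) *)
    (forall P P', filtration_pair U f S P -> filtration_pair U f S P' ->
       M P P' = M P' P) /\
    (* (2) *)
    (forall P, filtration_pair U f S P ->
       forall k, (M P P <= k)%N ->
       forall z, inNL P z -> r P P k z = iter k (fP f P) z) /\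
    (* (3) *)
    (forall P P' P'', filtration_pair U f S P -> filtration_pair U f S P' ->
       filtration_pair U f S P'' ->
       (M P P'' <= M P P' + M P' P'')%N) /\
    (* (4) *)
    (forall P P' P'', filtration_pair U f S P -> filtration_pair U f S P' ->
       filtration_pair U f S P'' ->
       forall k1 k2, (M P' P'' <= k1)%N -> (M P P' <= k2)%N ->
       forall z, inNL P z ->
         r P'' P (k1 + k2) z = r P'' P' k1 (r P' P k2 z)).
Proof.
move=> _ oU cf _; exact: main_sec.
Qed.
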